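(* Let $\lambda_0,\lambda_1>0$, let $\boldsymbol\alpha_0^\star$ and $\boldsymbol\alpha_1^\star$ be the optimal solutions of $\max_{\boldsymbol\alpha\ge\mathbf0}D_{\lambda_0}(\boldsymbol\alpha)$ and $\max_{\boldsymbol\alpha\ge\mathbf0}D_{\lambda_1}(\boldsymbol\alpha)$, respectively, and let $\boldsymbol\alpha_0\in\mathbb R^{2nK}$ and $\epsilon\ge0$ satisfy $\|\boldsymbol\alpha_0-\boldsymbol\alpha_0^\star\|_2\le\epsilon$. Then $$\Big\|\boldsymbol\alpha_1^\star-\frac{\lambda_0+\lambda_1}{2\lambda_0}\boldsymbol\alpha_0\Big\|_2\le\Big\|\frac{\lambda_0-\lambda_1}{2\lambda_0}\boldsymbol\alpha_0\Big\|_2+\Big(\frac{\lambda_0+\lambda_1}{2\lambda_0}+\frac{|\lambda_0-\lambda_1|}{2\lambda_0}\Big)\epsilon.$$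
   Context: Let $n,K,p\ge1$ be integers, $[n]=\{1,\dots,n\}$. For each $i\in[n]$ let $\mathbf x_i\in\mathbb R^p$ have nonnegative entries and let $\mathcal D_i,\mathcal S_i\subseteq[n]$ be sets of size $K$. Put $\mathbf c_{ij}=(\mathbf x_i-\mathbf x_j)\circ(\mathbf x_i-\mathbf x_j)$ (entrywise product). Vectors in $\mathbb R^{2nK}$ are indexed by the pairs $(i,l)$, $l\in\mathcal D_i$ (''different-class pairs'') and $(i,j)$, $j\in\mathcal S_i$ (''same-class pairs''). $\mathbf C\in\mathbb R^{p\times2nK}$ has column $\mathbf c_{il}$ for each different-class pair and $-\mathbf c_{ij}$ for each same-class pair. Fix $L\ge U\ge0$, $\eta>0$; let $\mathbf t\in\mathbb R^{2nK}$ have entry $L$ at different-class pairs and $-U$ at same-class pairs; $[z]_+=\max\{z,0\}$ entrywise; $\mathbf1$ the all-ones vector. For $\lambda>0$ and $\boldsymbol\alpha\in\mathbb R^{2nK}_{\ge0}$ define $$D_\lambda(\boldsymbol\alpha)=-\frac14\|\boldsymbol\alpha\|_2^2+\mathbf t^\top\boldsymbol\alpha-\frac{\lambda\eta}{2}\|\mathbf m_\lambda(\boldsymbol\alpha)\|_2^2,\qquad\mathbf m_\lambda(\boldsymbol\alpha)=\frac1{\lambda\eta}[\mathbf C\boldsymbol\alpha-\lambda\mathbf1]_+,$$ the dual of the primal problem $\min_{\mathbf m\ge\mathbf0}\sum_i\big[\sum_{l\in\mathcal D_i}([L-\mathbf m^\top\mathbf c_{il}]_+)^2+\sum_{j\in\mathcal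 S_i}([-U+\mathbf m^\top\mathbf c_{ij}]_+)^2\big]+\lambda(\mathbf m^\top\mathbf1+\frac\eta2\|\mathbf m\|_2^2)$. *)

(* Defs.v *)
From HB Require Import structures.
From mathcomp Require Import all_boot all_order all_algebra.
From mathcomp Require Import reals.
Set Implicit Arguments. Unset Strict Implicit. Unset Printing Implicit Defensive.
Import Order.TTheory GRing.Theory Num.Theory.
Local Open Scope ring_scope.

(* Pair index set of R^{2nK}: (i, k, true) is the different-class pair
   (i, D i k) and (i, k, false) is the same-class pair (i, S i k).
   The size-K sets D_i, S_i are given by injective enumerations
   D i, S i : 'I_K -> 'I_n. *)
Definition pidx (n K : nat) := ('I_n * 'I_K * bool)%type.

Section Dual.
Variables (R : realType) (n K p : nat).
Variables (x : 'I_n -> 'I_p -> R) (D S : 'I_n -> 'I_K -> 'I_n).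
Variables (L U eta : R).

Definition cvec (i j : 'I_n) : 'I_p -> R := fun r => (x i r - x j r) ^+ 2.

Definition Ccol (a : pidx n K) : 'I_p -> R :=
  let: (i, k, b) := a in
  if b then cvec i (D i k) else fun r => - cvec i (S i k) r.

Definition Cmul (alpha : pidx n K -> R) : 'I_p -> R :=
  fun r => \sum_(a : pidx n K) Ccol a r * alpha a.

Definition tvec (a : pidx n K) : R := let: (_, _, b) := a in if b then L else - U.

Definition sqnormI (v : pidx n K -> R) : R := \sum_(a : pidx n K) v a ^+ 2.
Definition sqnormP (v : 'I_p -> R) : R := \sum_(r < p) v r ^+ 2.

Definition mvec (lam : R) (alpha : pidx n K -> R) : 'I_p -> R :=
  fun r => (lam * eta)^-1 * Num.max (Cmul alpha r - lam) 0.

Definition Dual (lam : R) (alpha : pidx n K -> R) : R :=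
  - (4%:R)^-1 * sqnormI alpha + \sum_(a : pidx n K) tvec a * alpha a
  - lam * eta / 2%:R * sqnormP (mvec lam alpha).

Definition dual_opt (lam : R) (alpha : pidx n K -> R) : Prop :=
  (forall a, 0 <= alpha a) /\
  (forall beta : pidx n K -> R, (forall a, 0 <= beta a) ->
     Dual lam beta <= Dual lam alpha).
End Dual.

Definition norm2 (R : realType) (n K : nat) (v : pidx n K -> R) : R :=
  Num.sqrt (sqnormI v).

(* Main.v *)
Require Import Defs.
From HB Require Import structures.
From mathcomp Require Import all_boot all_order all_algebra.
From mathcomp Require Import reals.
From mathcomp Require Import ring lra.
Import Order.TTheory GRing.Theory Num.Theory.
Local Open Scope ring_scope.

Lemma sum_sq_expand (R : realType) (I : finType) (f g : I -> R) (s : R) :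
  \sum_i (f i + s * g i) ^+ 2 =
  \sum_i f i ^+ 2 + 2 * s * \sum_i f i * g i + s ^+ 2 * \sum_i g i ^+ 2.
Proof.
rewrite !mulr_sumr -!big_split /=; apply: eq_bigr => i _; ring.
Qed.

Lemma sum_lin (R : realType) (I : finType) (h f g : I -> R) (s : R) :
  \sum_i h i * (f i + s * g i) = \sum_i h i * f i + s * \sum_i h i * g i.
Proof.
rewrite !mulr_sumr -!big_split /=; apply: eq_bigr => i _; ring.
Qed.

Lemma CS2 (R : realType) (I : finType) (f g : I -> R) :
  (\sum_i f i * g i) ^+ 2 <= (\sum_i f i ^+ 2) * (\sum_i g i ^+ 2).
Proof.
set X := \sum_i f i * g i; set F := \sum_i f i ^+ 2; set G := \sum_i g i ^+ 2.
have G0 : 0 <= G by apply: sumr_ge0 => i _; exact: sqr_ge0.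
have [Gz|Gp] := eqVneq G 0.
  have g0 : forall i, g i = 0.
    move=> i; apply/eqP; rewrite -sqrf_eq0; apply/eqP.
    by move/eqP: Gz; rewrite psumr_eq0 => [/allP H|i' _]; [apply/eqP/H; rewrite mem_index_enum | exact: sqr_ge0].
  have -> : X = 0 by rewrite /X big1 // => i _; rewrite g0 mulr0.
  rewrite Gz mulr0 expr0n /=; done.
have Gpos : 0 < G by rewrite lt_def Gp G0.
have H : 0 <= \sum_i (G * f i - X * g i) ^+ 2 by apply: sumr_ge0 => i _; exact: sqr_ge0.
have E : \sum_i (G * f i - X * g i) ^+ 2 = G * (G * F - X ^+ 2).
  have := @sum_sq_expand R I (fun i => G * f i) g (- X).
  move=> E1; rewrite (eq_bigr (fun i => (G * f i + (- X) * g i) ^+ 2)); last by move=> i _; ring.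
  rewrite E1.
  have -> : \sum_i (G * f i) ^+ 2 = G ^+ 2 * F by rewrite /F mulr_sumr; apply: eq_bigr => i _; ring.
  have -> : \sum_i G * f i * g i = G * X by rewrite /X mulr_sumr; apply: eq_bigr => i _; ring.
  rewrite -/G; ring.
rewrite E in H.
have : 0 <= G * F - X ^+ 2 by rewrite -(pmulr_rge0 _ Gpos).
lra.
Qed.

Lemma sqnormI_ge0 (R : realType) (n K : nat) (f : pidx n K -> R) : 0 <= sqnormI f.
Proof. by apply: sumr_ge0 => i _; exact: sqr_ge0. Qed.

Lemma norm2_ge0 (R : realType) (n K : nat) (f : pidx n K -> R) : 0 <= norm2 f.
Proof. exact: sqrtr_ge0. Qed.

Lemma norm2_scale (R : realType) (n K : nat) (c : R) (f : pidx n K -> R) :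
  norm2 (fun a => c * f a) = `|c| * norm2 f.
Proof.
rewrite /norm2 /sqnormI.
have -> : \sum_a (c * f a) ^+ 2 = c ^+ 2 * \sum_a f a ^+ 2.
  by rewrite mulr_sumr; apply: eq_bigr => i _; ring.
by rewrite sqrtrM ?sqr_ge0 // sqrtr_sqr.
Qed.

Lemma sqrt_tri_aux (R : realType) (F G X : R) : 0 <= F -> 0 <= G ->
  X <= Num.sqrt F * Num.sqrt G -> Num.sqrt (F + 2 * X + G) <= Num.sqrt F + Num.sqrt G.
Proof.
move=> F0 G0 HX.
rewrite -(ger0_norm (addr_ge0 (sqrtr_ge0 F) (sqrtr_ge0 G))) -sqrtr_sqr ler_sqrt ?sqr_ge0 //.
have sF := sqr_sqrtr F0; have sG := sqr_sqrtr G0.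
rewrite sqrrD sF sG; lra.
Qed.

Lemma norm2_tri (R : realType) (n K : nat) (f g : pidx n K -> R) :
  norm2 (fun a => f a + g a) <= norm2 f + norm2 g.
Proof.
rewrite /norm2 /sqnormI.
set F := \sum_a f a ^+ 2; set G := \sum_a g a ^+ 2; set X := \sum_a f a * g a.
have F0 : 0 <= F by apply: sumr_ge0 => i _; exact: sqr_ge0.
have G0 : 0 <= G by apply: sumr_ge0 => i _; exact: sqr_ge0.
have HX : X <= Num.sqrt F * Num.sqrt G.
  apply: (le_trans (ler_norm X)).
  rewrite -sqrtr_sqr -sqrtrM // ler_sqrt; last by apply: mulr_ge0.
  exact: CS2.
have -> : \sum_a (f a + g a) ^+ 2 = F + 2 * X + G.
  rewrite /F /G /X mulr_sumr -!big_split; apply: eq_bigr => i _ /=; by rewrite sqrrD -mulr_natl mulrA.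
exact: sqrt_tri_aux.
Qed.

Lemma foc_aux (R : realType) (G Q : R) : 0 <= Q ->
  (forall s, 0 < s -> s <= 1 -> s * G <= s ^+ 2 * Q) -> G <= 0.
Proof.
move=> Q0 H; rewrite leNgt; apply/negP => Gp.
have GQ : 0 < G + Q by lra.
set s := G / (G + Q).
have s0 : 0 < s by rewrite /s divr_gt0.
have s1 : s <= 1 by rewrite /s ler_pdivrMr // mul1r; lra.
have e : s * (G + Q) = G by rewrite /s mulrVK // unitfE; move: GQ; rewrite lt_def; case/andP.
have := H s s0 s1.
have e2 : s ^+ 2 * Q = s * (s * (G + Q)) - s ^+ 2 * G by ring.
rewrite e in e2.
have : 0 < s ^+ 2 * G by rewrite mulr_gt0 // exprn_gt0.
lra.
Qed.

Lemma max_sq_le (R : realType) (y w : R) :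
  Num.max (y + w) 0 ^+ 2 <= Num.max y 0 ^+ 2 + 2 * Num.max y 0 * w + w ^+ 2.
Proof.
case: (lerP 0 y) => hy; case: (lerP 0 (y + w)) => hyw; nra.
Qed.

Lemma Cmul_lin (R : realType) (n K p : nat) (x : 'I_n -> 'I_p -> R)
  (D S : 'I_n -> 'I_K -> 'I_n) (f g : pidx n K -> R) (s : R) r :
  Cmul x D S (fun a => f a + s * g a) r = Cmul x D S f r + s * Cmul x D S g r.
Proof. by rewrite /Cmul sum_lin. Qed.

Lemma Dual_eq (R : realType) (n K p : nat) (x : 'I_n -> 'I_p -> R)
  (D S : 'I_n -> 'I_K -> 'I_n) (L U eta lam : R) (f : pidx n K -> R) :
  0 < eta -> 0 < lam ->
  Dual x D S L U eta lam f = - (4%:R)^-1 * sqnormI f + \sum_a tvec L U a * f a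
    - (2 * lam * eta)^-1 * \sum_r Num.max (Cmul x D S f r - lam) 0 ^+ 2.
Proof.
move=> he hl; rewrite /Dual /sqnormP /mvec; congr (_ - _).
rewrite !mulr_sumr; apply: eq_bigr => r _.
have : lam != 0 by rewrite gt_eqF. have : eta != 0 by rewrite gt_eqF.
move=> h1 h2; field; by rewrite h1 h2.
Qed.

Lemma foc (R : realType) (n K p : nat) (x : 'I_n -> 'I_p -> R)
  (D S : 'I_n -> 'I_K -> 'I_n) (L U eta lam : R) (a : pidx n K -> R) :
  0 < eta -> 0 < lam -> dual_opt x D S L U eta lam a ->
  forall b : pidx n K -> R, (forall i, 0 <= b i) ->
  \sum_i tvec L U i * (b i - a i) - (\sum_i a i * (b i - a i)) / 2
   - (lam * eta)^-1 * \sum_r Num.max (Cmul x D S a r - lam) 0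
        * Cmul x D S (fun i => b i - a i) r <= 0.
Proof.
move=> he hl [ha hopt] b hb.
pose d := fun i => b i - a i.
pose c := (2 * lam * eta)^-1.
have c0 : 0 < c by rewrite /c invr_gt0 !mulr_gt0.
have cc : (lam * eta)^-1 = 2 * c by rewrite /c; field; rewrite !gt_eqF.
rewrite cc.
apply: (@foc_aux R _ ((4%:R)^-1 * \sum_i d i ^+ 2 + c * \sum_r Cmul x D S d r ^+ 2)).
  apply: addr_ge0; apply: mulr_ge0.
  - by rewrite invr_ge0 ler0n.
  - by apply: sumr_ge0 => i _; exact: sqr_ge0.
  - exact: ltW c0.
  - by apply: sumr_ge0 => i _; exact: sqr_ge0.
move=> s s0 s1.
have hbs : forall i, 0 <= a i + s * d i.
  move=> i; have := ha i; have := hb i; rewrite /d; nra.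
have := hopt _ hbs; rewrite !Dual_eq // /sqnormI sum_sq_expand sum_lin.
rewrite (eq_bigr (fun r => Num.max (Cmul x D S a r + s * Cmul x D S d r - lam) 0 ^+ 2)); last first.
  by move=> r _; rewrite Cmul_lin.
have Hb : \sum_r Num.max (Cmul x D S a r + s * Cmul x D S d r - lam) 0 ^+ 2 <=
   \sum_r Num.max (Cmul x D S a r - lam) 0 ^+ 2
   + 2 * s * \sum_r Num.max (Cmul x D S a r - lam) 0 * Cmul x D S d r
   + s ^+ 2 * \sum_r Cmul x D S d r ^+ 2.
  apply: le_trans.
    apply: (@ler_sum _ _ _ _ _ (fun r => Num.max (Cmul x D S a r - lam) 0 ^+ 2
      + 2 * Num.max (Cmul x D S a r - lam) 0 * (s * Cmul x D S d r)
      + (s * Cmul x D S d r) ^+ 2)) => r _.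
    by rewrite addrAC; apply: max_sq_le.
  rewrite !mulr_sumr -!big_split /=; apply: ler_sum => r _; lra.
have Hc := ler_wpM2l (ltW c0) Hb.
rewrite -/c in Hc *.
move: Hc.
set P0 := \sum_r Num.max (Cmul x D S a r - lam) 0 ^+ 2.
set Ps := \sum_r Num.max (Cmul x D S a r + s * Cmul x D S d r - lam) 0 ^+ 2.
set P1 := \sum_r Num.max (Cmul x D S a r - lam) 0 * Cmul x D S d r.
set P2 := \sum_r Cmul x D S d r ^+ 2.
set A0 := \sum_i a i ^+ 2. set A1 := \sum_i a i * d i. set A2 := \sum_i d i ^+ 2.
set T0 := \sum_i tvec L U i * a i. set T1 := \sum_i tvec L U i * d i.
move=> Hc H.
nra.
Qed.

Lemma norm2_ext (R : realType) (n K : nat) (f g : pidx n K -> R) :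
  (forall a, f a = g a) -> norm2 f = norm2 g.
Proof. by move=> H; rewrite /norm2 /sqnormI (eq_bigr (fun a => g a ^+ 2)) // => a _; rewrite H. Qed.

Lemma Cmul_lin2 (R : realType) (n K p : nat) (x : 'I_n -> 'I_p -> R)
  (D S : 'I_n -> 'I_K -> 'I_n) (f g : pidx n K -> R) (s : R) r :
  Cmul x D S (fun a => s * f a - g a) r = s * Cmul x D S f r - Cmul x D S g r.
Proof.
rewrite /Cmul mulr_sumr -sumrB; apply: eq_bigr => i _; ring.
Qed.

Lemma core_ineq (R : realType) (l0 l1 z0 z1 : R) : 0 < l0 -> 0 < l1 ->
  (l0 * z1 - l1 * z0) * (l1 * Num.max (z0 - l0) 0 - l0 * Num.max (z1 - l1) 0) <= 0.
Proof.
move=> h0 h1.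
case: (lerP 0 (z0 - l0)) => hy; case: (lerP 0 (z1 - l1)) => hyw.
- have -> : (l0 * z1 - l1 * z0) * (l1 * (z0 - l0) - l0 * (z1 - l1)) = - (l0 * z1 - l1 * z0) ^+ 2 by ring.
  by rewrite oppr_le0 sqr_ge0.
- rewrite mulr0 subr0.
  have A : l0 * z1 - l1 * z0 <= 0 by nra.
  apply: mulr_le0_ge0 => //; apply: mulr_ge0 => //; exact: ltW.
- rewrite mulr0 sub0r.
  have A : 0 <= l0 * z1 - l1 * z0 by nra.
  apply: mulr_ge0_le0 => //; rewrite oppr_le0; apply: mulr_ge0 => //; exact: ltW.
- by rewrite !mulr0 subr0 mulr0.
Qed.

Lemma pt_ineq (R : realType) (l0 l1 eta z0 z1 : R) : 0 < l0 -> 0 < l1 -> 0 < eta ->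
  l1 * (l0 * eta)^-1 * (Num.max (z0 - l0) 0 * (l0 / l1 * z1 - z0))
  + l0 * (l1 * eta)^-1 * (Num.max (z1 - l1) 0 * (l1 / l0 * z0 - z1)) <= 0.
Proof.
move=> h0 h1 he.
have := @core_ineq R l0 l1 z0 z1 h0 h1.
set M0 := Num.max (z0 - l0) 0; set M1 := Num.max (z1 - l1) 0.
have -> : l1 * (l0 * eta)^-1 * (M0 * (l0 / l1 * z1 - z0))
  + l0 * (l1 * eta)^-1 * (M1 * (l1 / l0 * z0 - z1)) =
  (l0 * l1 * eta)^-1 * ((l0 * z1 - l1 * z0) * (l1 * M0 - l0 * M1)).
  by field; rewrite !gt_eqF.
move=> H; apply: mulr_ge0_le0 => //; rewrite invr_ge0 ltW // !mulr_gt0 //.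
Qed.

Theorem theorem3 (R : realType) (n K p : nat)
  (x : 'I_n -> 'I_p -> R) (D S : 'I_n -> 'I_K -> 'I_n) (L U eta : R)
  (hn : (1 <= n)%N) (hK : (1 <= K)%N) (hp : (1 <= p)%N)
  (hx : forall i r, 0 <= x i r)
  (hD : forall i, injective (D i)) (hS : forall i, injective (S i))
  (hUL : U <= L) (hU : 0 <= U) (heta : 0 < eta)
  (lam0 lam1 : R) (hl0 : 0 < lam0) (hl1 : 0 < lam1)
  (a0s a1s : pidx n K -> R)
  (h0s : dual_opt x D S L U eta lam0 a0s)
  (h1s : dual_opt x D S L U eta lam1 a1s)
  (a0 : pidx n K -> R) (eps : R) (heps : 0 <= eps)
  (hclose : norm2 (fun a => a0 a - a0s a) <= eps) :
  norm2 (fun a => a1s a - (lam0 + lam1) / (2%:R * lam0) * a0 a)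
  <= norm2 (fun a => (lam0 - lam1) / (2%:R * lam0) * a0 a)
     + ((lam0 + lam1) / (2%:R * lam0) + `|lam0 - lam1| / (2%:R * lam0)) * eps.
Proof.
have n0 : lam0 != 0 by rewrite gt_eqF.
have n1 : lam1 != 0 by rewrite gt_eqF.
have f0 := @foc _ _ _ _ x D S L U eta lam0 a0s heta hl0 h0s (fun i => lam0 / lam1 * a1s i)
  (fun i => mulr_ge0 (divr_ge0 (ltW hl0) (ltW hl1)) (h1s.1 i)).
have f1 := @foc _ _ _ _ x D S L U eta lam1 a1s heta hl1 h1s (fun i => lam1 / lam0 * a0s i)
  (fun i => mulr_ge0 (divr_ge0 (ltW hl1) (ltW hl0)) (h0s.1 i)).
simpl in f0, f1.
set T0 := \sum_i tvec L U i * (lam0 / lam1 * a1s i - a0s i) in f0.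
set T1 := \sum_i tvec L U i * (lam1 / lam0 * a0s i - a1s i) in f1.
set A0 := \sum_i a0s i * (lam0 / lam1 * a1s i - a0s i) in f0.
set A1 := \sum_i a1s i * (lam1 / lam0 * a0s i - a1s i) in f1.
set P0 := \sum_r _ in f0.
set P1 := \sum_r _ in f1.
pose B := \sum_i (a1s i - a0s i) * (lam0 * a1s i - lam1 * a0s i).
have Ti : lam1 * T0 + lam0 * T1 = 0.
  rewrite /T0 /T1 !mulr_sumr -big_split big1 // => i _ /=; field; exact/andP.
have Ai : lam1 * A0 + lam0 * A1 = - B.
  rewrite /A0 /A1 /B !mulr_sumr -big_split -sumrN; apply: eq_bigr => i _ /=; field; exact/andP.
have Pi : lam1 * (lam0 * eta)^-1 * P0 + lam0 * (lam1 * eta)^-1 * P1 <= 0.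
  rewrite /P0 /P1 !mulr_sumr -big_split /=; apply: sumr_le0 => r _.
  rewrite !Cmul_lin2 !mulrA -!(mulrA (_ * _)).
  exact: pt_ineq.
have B0 : B <= 0.
  have g0 := pmulr_rle0 _ hl1; have g1 := pmulr_rle0 _ hl0.
  have := f0; rewrite -g0 => {}f0.
  have := f1; rewrite -g1 => {}f1.
  nra.
set c := (lam0 + lam1) / (2%:R * lam0).
set r := (lam0 - lam1) / (2%:R * lam0).
have c0 : 0 <= c by rewrite /c divr_ge0 // ?addr_ge0 ?mulr_ge0 ?ler0n // ltW.
have E : sqnormI (fun a => a1s a - c * a0s a) = sqnormI (fun a => r * a0s a) + lam0^-1 * B.
  rewrite /sqnormI /B mulr_sumr -big_split; apply: eq_bigr => i _ /=.
  by rewrite /c /r; field.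
have N1 : norm2 (fun a => a1s a - c * a0s a) <= `|r| * norm2 a0s.
  rewrite -norm2_scale /norm2 ler_sqrt ?sqnormI_ge0 // E.
  have : lam0^-1 * B <= 0 by apply: mulr_ge0_le0 => //; rewrite invr_ge0 ltW.
  lra.
have N2 : norm2 a0s <= norm2 a0 + norm2 (fun a => a0 a - a0s a).
  rewrite (@norm2_ext _ _ _ a0s (fun a => a0 a + (-1) * (a0 a - a0s a))); last by move=> a; ring.
  apply: (le_trans (@norm2_tri _ _ _ _ _)).
  by rewrite norm2_scale normrN1 mul1r.
have N3 : norm2 (fun a => a1s a - c * a0 a) <=
    norm2 (fun a => a1s a - c * a0s a) + c * norm2 (fun a => a0 a - a0s a).
  rewrite (@norm2_ext _ _ _ (fun a => a1s a - c * a0 a)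
     (fun a => (a1s a - c * a0s a) + (- c) * (a0 a - a0s a))); last by move=> a; ring.
  apply: (le_trans (@norm2_tri _ _ _ _ _)).
  by rewrite norm2_scale normrN ger0_norm.
have Nr : `|r| = `|lam0 - lam1| / (2%:R * lam0).
  have h2 : 0 <= 2%:R * lam0 by rewrite mulr_ge0 ?ler0n // ltW.
  by rewrite /r normrM normfV (ger0_norm h2).
rewrite norm2_scale -Nr.
have r0 : 0 <= `|r| by [].
have g0 := @norm2_ge0 _ _ _ a0; have g1 := @norm2_ge0 _ _ _ (fun a => a0 a - a0s a).
have Y1 := ler_wpM2l r0 N2.
have Y2 := ler_wpM2l r0 hclose.
have Y3 := ler_wpM2l c0 hclose.
lra.
Qed.
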